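(* For a finite set $\mathcal{D}$ and $n\ge1$, let $p(n,\mathcal{D})$ be the number of degenerate $n$-ary relations on $\mathcal{D}$ divided by the number $2^{|\mathcal{D}|^n}$ of all $n$-ary relations on $\mathcal{D}$. Then $p(n,\mathcal{D})\to0$ when $|\mathcal{D}|\ge2$ is fixed and $n\to\infty$, and also when $n\ge2$ is fixed and $|\mathcal{D}|\to\infty$.
   Context: An $n$-ary relation on $\mathcal{D}$ is a subset $R\subseteq\mathcal{D}^{\{1,\dots,n\}}$. $R$ is degenerate if there is a partition $\{1,\dots,n\}=\Lambda_1\cup\dots\cup\Lambda_m$ with $m>1$ and all $\Lambda_i\ne\emptyset$ and relations $R^{\Lambda_i}\subseteq\mathcal{D}^{\Lambda_i}$ such that $R=\{a: a|_{\Lambda_i}\in R^{\Lambda_i}\ \forall i\}$. *)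

(* Defs.v *)
From HB Require Import structures.
From mathcomp Require Import all_boot all_order all_algebra.
From mathcomp Require Import all_classical all_reals all_analysis.
Set Implicit Arguments. Unset Strict Implicit. Unset Printing Implicit Defensive.
Import Order.TTheory GRing.Theory Num.Theory.

Definition tup (D : finType) (n : nat) := {ffun 'I_n -> D}.
Definition relation (D : finType) (n : nat) := {set tup D n}.

Definition subtup (D : finType) (n : nat) (L : {set 'I_n}) :=
  {ffun {i : 'I_n | i \in L} -> D}.

Definition restr (D : finType) (n : nat) (L : {set 'I_n}) (a : tup D n)
  : subtup D L := [ffun i => a (val i)].

(* R is degenerate: there is a partition of {1..n} into m > 1 nonempty blocks
   and relations R^Λ ⊆ D^Λ on the blocks with R = {a | a|_Λ ∈ R^Λ for all Λ}.
   (mathcomp's [partition] excludes the empty block.) *)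
Definition degenerate (D : finType) (n : nat) (R : relation D n) : Prop :=
  exists P : {set {set 'I_n}},
    finset.partition P [set: 'I_n] /\ 1 < #|P| /\
    exists RL : forall L : {set 'I_n}, {set subtup D L},
      forall a : tup D n,
        a \in R <-> (forall L, L \in P -> restr L a \in RL L).

Definition num_degenerate (D : finType) (n : nat) : nat :=
  #|[set R : relation D n | `[< degenerate R >]]|.

Definition pdeg (R : realType) (D : finType) (n : nat) : R :=
  (num_degenerate D n)%:R / (2 ^ (#|D| ^ n))%:R.

(* Main.v *)
Require Import Defs.
From HB Require Import structures.
From mathcomp Require Import all_boot all_order all_algebra.
From mathcomp Require Import all_classical all_reals all_analysis.
From mathcomp Require Import zify.
Import Order.TTheory GRing.Theory Num.Theory numFieldNormedType.Exports.
Set Implicit Arguments. Unset Strict Implicit. Unset Printing Implicit Defensive.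

Lemma card_setT' (T : finType) : #|{set T}| = (2 ^ #|T|)%N.
Proof. have := card_powerset [set: T]; rewrite cardsT => <-; apply: eq_card => A; by rewrite !inE finset.subsetT. Qed.

Lemma card_bigcup_le (I T : finType) (P : pred I) (F : I -> {set T}) :
  (#|\bigcup_(i | P i) F i| <= \sum_(i | P i) #|F i|)%N.
Proof.
elim/big_rec2: _ => [|i n U _ le]; first by rewrite cards0.
by apply: leq_trans (leq_card_setU _ _) _; rewrite leq_add2l.
Qed.

Definition prodrel (D : finType) (n : nat) (L : {set 'I_n})
  (S1 : {set subtup D L}) (S2 : {set subtup D (~: L)}) : relation D n :=
  [set a | (restr L a \in S1) && (restr (~: L) a \in S2)].

Arguments prodrel {D n} L S1 S2.

Lemma deg_prod (D : finType) (n : nat) (R : relation D n) :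
  degenerate R -> exists L : {set 'I_n}, [/\ L != finset.set0, L != [set: 'I_n] &
    exists S1, exists S2, R = prodrel L S1 S2].
Proof.
move=> [P [/and3P [covP trivP set0P] [cardP [RL HR]]]].
have [L LP] : exists L, L \in P.
  by apply/set0Pn; rewrite -card_gt0 (ltn_trans _ cardP).
have [L' [L'P L'L]] : exists L', L' \in P /\ L' != L.
  have : (1 < #|P|)%N := cardP.
  rewrite (cardsD1 L) LP ltnS card_gt0 => /set0Pn [L' ]; rewrite !inE => /andP[? ?].
  by exists L'.
have disj : forall L2, L2 \in P -> L2 != L -> forall i, i \in L2 -> i \notin L.
  move=> L2 L2P ne i iL2; move/finset.trivIsetP: trivP => /(_ L2 L L2P LP ne) dj.
  by rewrite (disjointFr dj iL2).
exists L; split.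
- apply: contraNneq set0P => <-; exact: LP.
- apply/negP => /eqP LT.
  have L'0 : L' = finset.set0.
    apply/finset.setP => i; rewrite finset.in_set0; apply/negP => iL'.
    by have := disj L' L'P L'L i iL'; rewrite LT finset.in_setT.
  by move: set0P; rewrite -L'0 L'P.
exists (RL L), [set restr (~: L) b | b in R].
apply/finset.setP => a; rewrite inE.
apply/idP/andP.
- move=> aR; split; first by move/HR: aR; apply.
  by apply/imsetP; exists a.
- move=> [aL /imsetP [b bR eqb]]; apply/HR => L2 L2P.
  have [->|ne] := eqVneq L2 L; first exact: aL.
  have -> : restr L2 a = restr L2 b.
    apply/ffunP => x; rewrite !ffunE.
    have xc : val x \in ~: L by rewrite inE; apply: disj ne _ (valP x).
    have := congr1 (fun f : subtup D (~: L) => f (exist _ (val x) xc)) eqb.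
    by rewrite !ffunE.
  by move/HR: bR; apply.
Qed.

Lemma pow_conv (d k j : nat) : (1 <= k)%N -> (1 <= j)%N ->
  (d ^ k + d ^ j <= d + d ^ (k + j).-1)%N.
Proof.
case: k => // k _; case: j => // j _.
rewrite addSn /= addnS expnS [d ^ j.+1]expnS expnS expnD.
have [->|dpos] := posnP d; first by rewrite !mul0n.
have x1 : (1 <= d ^ k)%N by rewrite expn_gt0 dpos.
have y1 : (1 <= d ^ j)%N by rewrite expn_gt0 dpos.
move: x1 y1; set x := d ^ k; set y := d ^ j => x1 y1.
clearbody x y. have h : (x + y <= 1 + x * y)%N by nia.
rewrite -mulnDr. rewrite -{2}[d]muln1 -mulnDr leq_mul2l h orbT. done.
Qed.

Lemma num_deg_le (D : finType) (n : nat) :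
  (num_degenerate D n <= 2 ^ n * 2 ^ (#|D| + #|D| ^ n.-1))%N.
Proof.
set d := #|D|.
pose Img (L : {set 'I_n}) := [set prodrel L x.1 x.2 | x in [set: {set subtup D L} * {set subtup D (~: L)}]].
have sub : [set R : relation D n | `[< degenerate R >]] \subset
   \bigcup_(L : {set 'I_n} | (L != finset.set0) && (L != [set: 'I_n])) Img L.
  apply/fintype.subsetP => R; rewrite inE => /asboolP /deg_prod [L [L0 LT [S1 [S2 ->]]]].
  apply/bigcupP; exists L; first by rewrite L0 LT.
  by apply/imsetP; exists (S1, S2); rewrite ?inE.
rewrite /num_degenerate; apply: leq_trans (subset_leq_card sub) _.
apply: leq_trans (card_bigcup_le _ _) _.
apply: (@leq_trans (\sum_(L : {set 'I_n}) 2 ^ (d + d ^ n.-1))); last first.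
  by rewrite sum_nat_const cardT -cardE card_setT' card_ord.
rewrite big_mkcond /=; apply: leq_sum => L _.
case: ifP => // /andP [L0 LT].
apply: leq_trans (leq_imset_card _ _) _.
rewrite cardsT card_prod !card_setT' !card_ffun !card_sig.
have -> : #|[pred x | x \in L]| = #|L| by apply: eq_card.
have -> : #|[pred x | x \in ~: L]| = #|~: L| by apply: eq_card.
rewrite -expnD leq_exp2l //.
have E := cardsC L; rewrite card_ord in E.
apply: leq_trans (pow_conv _ _ _) _; last by rewrite E.
- by rewrite card_gt0.
- rewrite card_gt0; apply: contra LT => /eqP C.
  by rewrite -(finset.setCK L) C finset.setC0.
Qed.

Local Open Scope ring_scope.

Lemma pdeg_small (R : realType) (D : finType) (n M : nat) :
  (n + (#|D| + #|D| ^ n.-1) + M <= #|D| ^ n)%N ->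
  `|pdeg R D n| <= (M.+1)%:R^-1.
Proof.
move=> H.
have b0 : (0 : R) < (2 ^ (#|D| ^ n))%:R by rewrite ltr0n expn_gt0.
have H2 : (num_degenerate D n * M.+1 <= 2 ^ (#|D| ^ n))%N.
  apply: leq_trans (leq_mul (num_deg_le D n) (leqnn _)) _.
  apply: leq_trans (leq_mul (leqnn _) (ltn_expl M (isT : (1 < 2)%N))) _.
  by rewrite -!expnD leq_exp2l.
rewrite /pdeg ger0_norm ?divr_ge0 ?ler0n //.
rewrite ler_pdivrMr // mulrC ler_pdivlMr ?ltr0n // -natrM ler_nat.
by [].
Qed.

Lemma eps_bound (R : realType) (eps : R) : 0 < eps ->
  exists K : nat, forall M, (K <= M)%N -> (M.+1)%:R^-1 < eps.
Proof.
move=> e0; exists (Num.Def.archi_bound eps^-1) => M HM.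
rewrite invf_plt ?posrE ?ltr0n //.
apply: lt_le_trans (archi_boundP _) _; first by rewrite invr_ge0 ltW.
by rewrite ler_nat (leq_trans HM).
Qed.

Lemma nat1 (d n : nat) : (2 <= d)%N -> (5 <= n)%N ->
  (n + (d + d ^ n.-1) + n <= d ^ n)%N.
Proof.
move=> d2 n5; have [m ->] : exists m, n = m.+4.+1 by exists (n - 5)%N; lia.
rewrite /= !expnS.
have X1 : (m.+1 <= 2 ^ m)%N by exact: ltn_expl.
have Z8 : (2 ^ m <= d ^ m)%N by case: (m) => [|k] //; rewrite leq_exp2r.
move: X1 Z8; generalize (2 ^ m)%N (d ^ m)%N => X Z X1 Z8.
have Z1 : (1 <= Z)%N by lia.
have h0 : (8 <= d * (d * (d * Z)))%N.
  by apply: (leq_trans _ (leq_mul d2 (leq_mul d2 (leq_mul d2 Z1)))).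
have h1 : (8 * d <= d * (d * (d * (d * Z))))%N by rewrite mulnC leq_mul2l h0 orbT.
have h2 : (16 * Z <= d * (d * (d * (d * Z))))%N.
  by rewrite !mulnA leq_mul2r (leq_trans _ (leq_mul (leq_mul (leq_mul d2 d2) d2) d2)) ?orbT.
move: h1 h2; generalize (d * (d * (d * (d * Z))))%N => W h1 h2.
have h3 : (2 * W <= d * W)%N by rewrite leq_mul2r d2 orbT.
lia.
Qed.

Lemma nat2 (d n : nat) : (2 <= n)%N -> (n + 4 <= d)%N ->
  (n + (d + d ^ n.-1) + d <= d ^ n)%N.
Proof.
move=> n2 Hd; have [m E] : exists m, n = m.+2 by exists (n - 2)%N; lia.
subst n.
rewrite /= !expnS.
have Y1 : (1 <= d ^ m)%N by rewrite expn_gt0; case: d Hd.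
move: Y1; generalize (d ^ m)%N => Y Y1.
nia.
Qed.

Unset Implicit Arguments.
Local Open Scope classical_set_scope.
Local Open Scope ring_scope.

Theorem theorem6 (R : realType) :
  (forall D : finType, (2 <= #|D|)%N ->
     (fun n : nat => pdeg R D n) @ \oo --> (0 : R^o)) /\
  (forall n : nat, (2 <= n)%N ->
     forall eps : R, 0 < eps ->
       exists N : nat, forall D : finType, (N <= #|D|)%N ->
         `|pdeg R D n| < eps).
Proof.
split.
- move=> D D2; apply/cvgr0Pnorm_lt => eps e0.
  have [K HK] := eps_bound e0.
  exists (maxn K 5) => // n /= Hn.
  have n5 : (5 <= n)%N by apply: leq_trans Hn; rewrite leq_maxr.
  have Kn : (K <= n)%N by apply: leq_trans Hn; rewrite leq_maxl.
  exact: (le_lt_trans (@pdeg_small R D n n (nat1 D2 n5)) (HK n Kn)).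
- move=> n n2 eps e0.
  have [K HK] := eps_bound e0.
  exists (maxn K (n + 4)) => D HD.
  have d4 : (n + 4 <= #|D|)%N by apply: leq_trans HD; rewrite leq_maxr.
  have Kd : (K <= #|D|)%N by apply: leq_trans HD; rewrite leq_maxl.
  exact: (le_lt_trans (@pdeg_small R D n #|D| (nat2 n2 d4)) (HK _ Kd)).
Qed.
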